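(* Let $\mathcal{G}=(\mathcal{V},\mathcal{E})$ be an undirected graph with nodes $1,\dots,n$ and edges indexed $1,\dots,E$, and let $\mathcal{S}_i$ be the set of edges incident to node $i$. For every $z\in\mathbb{R}^E$, $$\left(\|z\|_{\mathrm{SM}}^*\right)^2\ge\frac12\left(\|z\|_{\mathrm{SMNO}}^*\right)^2.$$
   Context: Convention: a maximum over an empty set is $0$. Define $\|x\|_{\mathrm{SM}}=\sqrt{\sum_{i=1}^n\max_{j\in\mathcal{S}_i}x_j^2}$ on $\mathbb{R}^E$ and its dual norm $\|z\|_{\mathrm{SM}}^*=\sup_x\{z^Tx:\|x\|_{\mathrm{SM}}\le1\}$. An assignment is a choice, for each edge $\ell\equiv(i,j)$, of exactly one of its two endpoints; it yields pairwise disjoint sets $\mathcal{S}_i'\subseteq\mathcal{S}_i$ (possibly empty) whose union is all edges, where $\mathcal{S}_i'$ is the set of edges assigned to $i$. For $x\in\mathbb{R}^E$ let $\varphi(x)=\max$ over all assignments of $\sum_{i=1}^n\max_{\ell\in\mathcal{S}_i'}x_\ell^2$ (the maximizing assignment $\{\mathcal{S}_i^*\}$ depends on $x$). Then $\|z\|_{\mathrm{SMNO}}^*=\sup_x\{z^Tx:\sqrt{\varphi(x)}\le1\}$, i.e. the supremum of $z^Tx$ over $x$ subject to $\sqrt{\sum_i\max_{\ell\in\mathcal{S}_i^*}x_\ell^2}\le1$ with $\{\mathcal{S}^*_i\}$ the assignment maximizing $\sum_i\max_{\ell\in\mathcal{S}_i'}x_\ell^2$. *)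

(* Defs.v *)
From HB Require Import structures.
From mathcomp Require Import all_boot all_order all_algebra.
From mathcomp Require Import all_classical all_reals.
Set Implicit Arguments. Unset Strict Implicit. Unset Printing Implicit Defensive.
Import Order.TTheory GRing.Theory Num.Theory.
Local Open Scope ring_scope.
Local Open Scope classical_set_scope.

Section Norms.
Variables (R : realType) (n E : nat) (ends : 'I_E -> 'I_n * 'I_n).

Definition incident (i : 'I_n) (l : 'I_E) : bool :=
  ((ends l).1 == i) || ((ends l).2 == i).

(* max over a (possibly empty) set of squares; empty max = 0 *)
Definition sqmax (P : pred 'I_E) (x : 'I_E -> R) : R :=
  \big[Num.max/0]_(l | P l) (x l ^+ 2).

Definition SMnorm (x : 'I_E -> R) : R :=
  Num.sqrt (\sum_(i < n) sqmax (incident i) x).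

Definition assigned (a : {ffun 'I_E -> bool}) (l : 'I_E) : 'I_n :=
  if a l then (ends l).1 else (ends l).2.

Definition assign_val (a : {ffun 'I_E -> bool}) (x : 'I_E -> R) : R :=
  \sum_(i < n) sqmax (fun l => assigned a l == i) x.

Definition phi (x : 'I_E -> R) : R :=
  \big[Num.max/0]_(a : {ffun 'I_E -> bool}) assign_val a x.

Definition dot (z x : 'I_E -> R) : R := \sum_l z l * x l.

Definition SMdual (z : 'I_E -> R) : R :=
  sup [set dot z x | x in [set x | SMnorm x <= 1]].

Definition SMNOdual (z : 'I_E -> R) : R :=
  sup [set dot z x | x in [set x | Num.sqrt (phi x) <= 1]].

End Norms.

(* Main.v *)
Require Import Defs.
From HB Require Import structures.
From mathcomp Require Import all_boot all_order all_algebra.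
From mathcomp Require Import all_classical all_reals.
From mathcomp Require Import lra.
Import Order.TTheory GRing.Theory Num.Theory.
Local Open Scope ring_scope.

Set Implicit Arguments.
Section H.
Variables (R : realType) (n E : nat) (ends : 'I_E -> 'I_n * 'I_n).

Lemma sqmax_ge0 (P : pred 'I_E) (x : 'I_E -> R) : 0 <= sqmax P x.
Proof.
rewrite /sqmax; elim/big_ind: _ => //= [a b ha hb|l _].
  by rewrite le_max ha.
exact: sqr_ge0.
Qed.

Lemma sqmax_ub (P : pred 'I_E) (x : 'I_E -> R) l : P l -> x l ^+ 2 <= sqmax P x.
Proof. by move=> Pl; rewrite /sqmax; apply: le_bigmax_cond. Qed.

Lemma sqmax_le (P : pred 'I_E) (x : 'I_E -> R) c : 0 <= c ->
  (forall l, P l -> x l ^+ 2 <= c) -> sqmax P x <= c.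
Proof. by move=> c0 H; rewrite /sqmax; apply: bigmax_le. Qed.

Lemma phi_ge (a : {ffun 'I_E -> bool}) (x : 'I_E -> R) :
  assign_val ends a x <= phi ends x.
Proof. by rewrite /phi; apply: le_bigmax. Qed.

Lemma SM_le_phi (x : 'I_E -> R) :
  \sum_(i < n) sqmax (incident ends i) x <= 2 * phi ends x.
Proof.
pose a1 : {ffun 'I_E -> bool} := [ffun _ => true].
pose a2 : {ffun 'I_E -> bool} := [ffun _ => false].
apply (@le_trans _ _ (assign_val ends a1 x + assign_val ends a2 x)); last first.
  have h1 := phi_ge a1 x; have h2 := phi_ge a2 x.
  rewrite mulr_natl mulr2n; exact: lerD.
rewrite /assign_val -big_split /=; apply: ler_sum => i _.
apply: sqmax_le; first by rewrite addr_ge0 // sqmax_ge0.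
move=> l /orP[] /eqP e.
- have h1 : x l ^+ 2 <= sqmax (fun l0 => assigned ends a1 l0 == i) x.
    by apply: sqmax_ub; rewrite /assigned ffunE e.
  have h2 := sqmax_ge0 (fun l0 => assigned ends a2 l0 == i) x.
  lra.
- have h1 : x l ^+ 2 <= sqmax (fun l0 => assigned ends a2 l0 == i) x.
    by apply: sqmax_ub; rewrite /assigned ffunE e.
  have h2 := sqmax_ge0 (fun l0 => assigned ends a1 l0 == i) x.
  lra.
Qed.


Lemma sqrt_le1 (s : R) : (Num.sqrt s <= 1) = (s <= 1).
Proof. by rewrite -[X in _ <= X]sqrtr1 ler_sqrt ?ler01. Qed.

Lemma sum_sqmax_ge0 (x : 'I_E -> R) : 0 <= \sum_(i < n) sqmax (incident ends i) x.
Proof. by apply: sumr_ge0 => i _; apply: sqmax_ge0. Qed.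

Lemma SM_coord (x : 'I_E -> R) l : SMnorm ends x <= 1 -> `|x l| <= 1.
Proof.
rewrite /SMnorm sqrt_le1 => hs.
have h1 : x l ^+ 2 <= sqmax (incident ends (ends l).1) x.
  by apply: sqmax_ub; rewrite /incident eqxx.
have h2 : sqmax (incident ends (ends l).1) x <= \sum_(i < n) sqmax (incident ends i) x.
  rewrite (bigD1 (ends l).1) //=.
  have : 0 <= \sum_(i < n | i != (ends l).1) sqmax (incident ends i) x.
    by apply: sumr_ge0 => i _; apply: sqmax_ge0.
  lra.
have h3 : `|x l| ^+ 2 <= 1 by rewrite real_normK ?num_real; lra.
have h4 := normr_ge0 (x l).
nra.
Qed.

Lemma phi_ge0 (x : 'I_E -> R) : 0 <= phi ends x.
Proof.
apply: le_trans (phi_ge [ffun _ => true] x).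
by apply: sumr_ge0 => i _; apply: sqmax_ge0.
Qed.

Lemma sqmax_zero (P : pred 'I_E) : sqmax P (fun _ => 0 : R) = 0.
Proof.
apply/eqP; rewrite eq_le sqmax_ge0 andbT.
by apply: sqmax_le => // l _; rewrite expr0n.
Qed.

Lemma sqmax_scale (P : pred 'I_E) (x : 'I_E -> R) k :
  sqmax P (fun l => k * x l) <= k ^+ 2 * sqmax P x.
Proof.
apply: sqmax_le; first by rewrite mulr_ge0 ?sqr_ge0 ?sqmax_ge0.
move=> l Pl; rewrite exprMn; apply: ler_wpM2l; first exact: sqr_ge0.
exact: sqmax_ub.
Qed.

End H.
Unset Implicit Arguments.


Theorem lemma5 (R : realType) (n E : nat) (ends : 'I_E -> 'I_n * 'I_n)
  (no_loop : forall l, (ends l).1 != (ends l).2)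
  (no_parallel : forall l l', [set (ends l).1; (ends l).2] = [set (ends l').1; (ends l').2] -> l = l')
  (z : 'I_E -> R) :
  (SMdual ends z) ^+ 2 >= 2^-1 * (SMNOdual ends z) ^+ 2.
Proof.
rewrite /SMdual /SMNOdual.
set S1 := ([set dot z x | x in [set x | SMnorm ends x <= 1]])%classic.
set S2 := ([set dot z x | x in [set x | Num.sqrt (phi ends x) <= 1]])%classic.
pose x0 : 'I_E -> R := fun _ => 0.
have dot0 : dot z x0 = 0 by rewrite /dot big1 // => l _; rewrite mulr0.
have S1ub : ubound S1 (\sum_l `|z l|).
  move=> _ [x /= hx <-]; rewrite /dot; apply: ler_sum => l _.
  apply: le_trans (ler_norm _) _; rewrite normrM.
  have := SM_coord _ _ _ l hx; have := normr_ge0 (z l); nra.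
have S1ne : S1 (dot z x0).
  exists x0 => //=; rewrite /SMnorm sqrt_le1 big1 ?ler01 // => i _.
  exact: sqmax_zero.
have s1 := ub_le_sup (ex_intro _ _ S1ub).
set r := Num.sqrt (2 : R).
have r0 : 0 < r by rewrite sqrtr_gt0 ltr0n.
have r2 : r ^+ 2 = 2 by rewrite sqr_sqrtr ?ler0n.
have S2ub : ubound S2 (r * sup S1).
  move=> _ [x /= hx <-].
  have hp : phi ends x <= 1 by rewrite -sqrt_le1.
  pose y := fun l => r^-1 * x l.
  have hy : SMnorm ends y <= 1.
    rewrite /SMnorm sqrt_le1.
    apply: (@le_trans _ _ (\sum_(i < n) (r^-1 ^+ 2 * sqmax (incident ends i) x))).
      by apply: ler_sum => i _; apply: sqmax_scale.
    rewrite -mulr_sumr exprVn r2.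
    have := SM_le_phi _ ends x; have : (0:R) < 2^-1 by rewrite invr_gt0 ltr0n.
    move=> h1 h2.
    apply: le_trans (ler_wpM2l (ltW h1) h2) _.
    by rewrite mulrA mulVf ?pnatr_eq0 // mul1r.
  have hd : dot z x = r * dot z y.
    rewrite /dot /y mulr_sumr; apply: eq_bigr => l _.
    by rewrite mulrA (mulrC r) -mulrA mulVKf // gt_eqF.
  rewrite hd ler_pM2l //; apply: s1; by exists y.
have S2ne : S2 (dot z x0).
  exists x0 => //=; rewrite sqrt_le1.
  apply: bigmax_le => // a _; rewrite /assign_val big1 // => i _.
  exact: sqmax_zero.
have h1 : sup S2 <= r * sup S1 by apply: ge_sup => //; exists (dot z x0).
have h2 : 0 <= sup S2 by rewrite -dot0; apply: (ub_le_sup (ex_intro _ _ S2ub)).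
have h3 : sup S2 ^+ 2 <= (r * sup S1) ^+ 2.
  move: h1 h2; set t := r * sup S1; set u := sup S2 => h1 h2; nra.
rewrite exprMn r2 in h3.
lra.
Qed.
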